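(* Let $r,s\ge2$ be integers satisfying $r\ge3$ if $s=2$, $r\ge2$ if $s\in\{3,4\}$, and $r\ge s-1$ if $s\ge5$. Let \[ \alpha_0=\frac{1}{r(s-1)},\qquad \beta_0=\frac{rs-r-s}{r(s-1)}. \] Then $(\alpha_0,\beta_0)$ is a local maximiser of $\varphi$ on $K$, and the Hessian of $\varphi$ at $(\alpha_0,\beta_0)$ is strictly negative definite.
   Context: Let $g(x)=x\log x$ for $x>0$, with $g(0)=0$. Let \[ K=\{(\alpha,\beta)\in\mathbb R^2:\alpha,\beta\ge0,\ (s-1)\alpha+\beta\le1\}. \] Define $\varphi:K\to\mathbb R$ by \begin{align*} \varphi(\alpha,\beta)&=(\alpha+\beta)\log(r-1)+g(\alpha+\beta)+g(r-1-\alpha-\beta)-\tfrac{2}{s-1}g(\beta)-g(\alpha)\\ &\quad-\tfrac{1}{s(s-1)}g(rs-r-s-s\beta)-\tfrac{1}{s-1}g(1-(s-1)\alpha-\beta). \end{align*} *)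

(* Defs.v *)
From Stdlib Require Import Reals.
From Coquelicot Require Import Coquelicot.
Open Scope R_scope.

(* g(x) = x log x for x > 0, g(0) = 0.  The paper leaves g undefined for
   x < 0; we set it to 0 there (irrelevant near the point of interest). *)
Definition g (x : R) : R := if Rlt_dec 0 x then x * ln x else 0.

Definition inK (s a b : R) : Prop :=
  0 <= a /\ 0 <= b /\ (s - 1) * a + b <= 1.

Definition phi (r s a b : R) : R :=
  (a + b) * ln (r - 1) + g (a + b) + g (r - 1 - a - b)
  - (2 / (s - 1)) * g b - g a
  - (1 / (s * (s - 1))) * g (r * s - r - s - s * b)
  - (1 / (s - 1)) * g (1 - (s - 1) * a - b).

Definition d_aa (f : R -> R -> R) (a0 b0 : R) : R :=
  Derive (fun a => Derive (fun a' => f a' b0) a) a0.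
Definition d_bb (f : R -> R -> R) (a0 b0 : R) : R :=
  Derive (fun b => Derive (fun b' => f a0 b') b) b0.
Definition d_ab (f : R -> R -> R) (a0 b0 : R) : R :=
  Derive (fun b => Derive (fun a => f a b) a0) b0.
Definition d_ba (f : R -> R -> R) (a0 b0 : R) : R :=
  Derive (fun a => Derive (fun b => f a b) b0) a0.

Definition hessian_neg_def (f : R -> R -> R) (a0 b0 : R) : Prop :=
  forall u v : R, (u, v) <> (0, 0) ->
    u * u * d_aa f a0 b0 + u * v * d_ab f a0 b0
    + v * u * d_ba f a0 b0 + v * v * d_bb f a0 b0 < 0.

(* Main.v *)
Require Import Defs.
From Stdlib Require Import Reals Lra Lia Psatz.
From Coquelicot Require Import Coquelicot.
Open Scope R_scope.

Lemma loc_lin (x c d : R) : 0 < c*x + d -> locally x (fun y => 0 < c*y + d).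
Proof.
  intros H.
  assert (Hp : 0 < (c*x+d)/(Rabs c + 1)).
  { apply Rdiv_lt_0_compat; [lra|]. pose proof (Rabs_pos c); lra. }
  exists (mkposreal _ Hp). intros y Hy.
  change (Rabs (y - x) < (c*x+d)/(Rabs c + 1)) in Hy.
  pose proof (Rabs_pos c).
  assert (Rabs (c*(y-x)) < c*x+d).
  { rewrite Rabs_mult.
    apply Rle_lt_trans with (Rabs c * ((c*x+d)/(Rabs c + 1))).
    - apply Rmult_le_compat_l; lra.
    - apply Rmult_lt_reg_r with (Rabs c + 1). lra.
      field_simplify; try lra. }
  apply Rabs_lt_between in H1. lra.
Qed.
Lemma ball_pos (t c : R) : 0 < t < 2 -> Rabs (c - 1) <= Rabs (t - 1) -> 0 < c.
Proof.
  intros Ht Hc. apply Rabs_le_between in Hc.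
  destruct (Rle_lt_dec t 1).
  + rewrite Rabs_left1 in Hc by lra. lra.
  + rewrite Rabs_right in Hc by lra. lra.
Qed.

Lemma kbound (t : R) : 0 < t < 2 -> 0 <= (t-1)*(ln t - 2*(t-1)/(t+1)).
Proof.
  intros Ht.
  destruct (MVT_cor4 (fun t => ln t - 2*(t-1)/(t+1)) (fun c => (c-1)^2/(c*(c+1)^2)) 1 (Rabs (t-1)))
    with (b := t) as [c [Hc1 Hc2]].
  - intros c Hc.
    assert (0 < c) by (apply (ball_pos t c); auto).
    auto_derive.
    + split; [lra|split;[|exact I]]. lra.
    + field. lra.
  - lra.
  - assert (0 < c) by (apply (ball_pos t c); auto).
    set (D := (c-1)^2/(c*(c+1)^2)) in *.
    rewrite ln_1 in Hc1.
    replace (2*(1-1)/(1+1)) with 0 in Hc1 by field.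
    assert (0 <= D).
    { unfold D, Rdiv. apply Rmult_le_pos. apply pow2_ge_0. left; apply Rinv_0_lt_compat.
      try (apply Rmult_lt_0_compat; [lra| apply pow_lt; lra]). }
    replace (ln t - 2 * (t - 1) / (t + 1)) with (D * (t - 1)) by lra.
    replace ((t-1)*(D*(t-1))) with (D*(t-1)^2) by ring. apply Rmult_le_pos; [auto|apply pow2_ge_0].
Qed.

Lemma jbound (t : R) : 0 < t < 2 -> (t-1)*(ln t - (t - 1/t)/2) <= 0.
Proof.
  intros Ht.
  destruct (MVT_cor4 (fun t => ln t - (t - 1/t)/2) (fun c => -((c-1)^2/(2*c^2))) 1 (Rabs (t-1)))
    with (b := t) as [c [Hc1 Hc2]].
  - intros c Hc.
    assert (0 < c) by (apply (ball_pos t c); auto).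
    auto_derive.
    + split; [lra|split;[|exact I]]. lra.
    + field. lra.
  - lra.
  - assert (0 < c) by (apply (ball_pos t c); auto).
    set (D := (c-1)^2/(2*c^2)) in *.
    rewrite ln_1 in Hc1.
    replace ((1 - 1/1)/2) with 0 in Hc1 by field.
    assert (0 <= D).
    { unfold D, Rdiv. apply Rmult_le_pos. apply pow2_ge_0. left; apply Rinv_0_lt_compat.
      try (apply Rmult_lt_0_compat; [lra| apply pow_lt; lra]). }
    replace (ln t - (t - 1/t)/2) with (- D * (t - 1)) by lra.
    replace ((t-1)*(-D*(t-1))) with (-(D*(t-1)^2)) by ring.
    assert (0 <= D*(t-1)^2) by (apply Rmult_le_pos; [auto|apply pow2_ge_0]). lra.
Qed.

Definition E (x y : R) : R := y * ln y - x * ln x - (ln x + 1) * (y - x).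

Lemma Ebound (x y d : R) : 0 < x -> 0 <= d < 1 -> Rabs (y - x) <= d * x ->
  (y-x)^2/((2+d)*x) <= E x y <= (y-x)^2/((2-d)*x).
Proof.
  intros Hx Hd Hy.
  apply Rabs_le_between in Hy.
  set (t := y / x).
  assert (Hyt : y = t * x) by (unfold t; field; lra).
  assert (Ht : 0 < t < 2).
  { assert (0 < y) by nra. split. unfold t; apply Rdiv_lt_0_compat; lra. nra. }
  assert (Hdt : Rabs (t - 1) <= d).
  { apply Rabs_le_between. rewrite Hyt in Hy. split; nra. }
  apply Rabs_le_between in Hdt.
  assert (HE : E x y = x * (t * ln t - t + 1)).
  { unfold E. rewrite Hyt, ln_mult by lra. ring. }
  pose proof (kbound t Ht) as Hk. pose proof (jbound t Ht) as Hj.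
  assert (Kt : t * ln t - t + 1 - (t-1)^2/(t+1) = t * (ln t - 2*(t-1)/(t+1))) by (field; lra).
  assert (Jt : t * ln t - t + 1 - (t-1)^2/2 = t * (ln t - (t - 1/t)/2)) by (field; lra).
  replace ((y-x)^2/((2+d)*x)) with (x * ((t-1)^2/(2+d))) by (rewrite Hyt; field; lra).
  replace ((y-x)^2/((2-d)*x)) with (x * ((t-1)^2/(2-d))) by (rewrite Hyt; field; lra).
  rewrite HE.
  assert (B1 : (t-1)^2/(2+d) <= (t-1)^2/(t+1)).
  { apply Rmult_le_compat_l. apply pow2_ge_0. apply Rinv_le_contravar; lra. }
  assert (B2 : (t-1)^2/(2+d) <= (t-1)^2/2).
  { apply Rmult_le_compat_l. apply pow2_ge_0. apply Rinv_le_contravar; lra. }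
  assert (B3 : (t-1)^2/(t+1) <= (t-1)^2/(2-d)).
  { apply Rmult_le_compat_l. apply pow2_ge_0. apply Rinv_le_contravar; lra. }
  assert (B4 : (t-1)^2/2 <= (t-1)^2/(2-d)).
  { apply Rmult_le_compat_l. apply pow2_ge_0. apply Rinv_le_contravar; lra. }
  set (L := ln t - 2*(t-1)/(t+1)) in *. set (J := ln t - (t - 1/t)/2) in *.
  set (Fv := t * ln t - t + 1) in *.
  assert (Fv <= (t-1)^2/(2-d) /\ (t-1)^2/(2+d) <= Fv).
  { destruct (Rle_lt_dec t 1).
    -
      assert (L <= 0 \/ t = 1) by (destruct (Req_dec t 1); [right|left]; auto; nra).
      destruct (Req_dec t 1) as [E1|E1].
      + subst Fv. rewrite E1, ln_1. replace (1-1) with 0 by ring. 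
        replace (0^2/(2-d)) with 0 by (field; lra). replace (0^2/(2+d)) with 0 by (field; lra). lra.
      + assert (L <= 0) by nra. assert (0 <= J) by nra. nra.
    - assert (0 <= L) by nra. assert (J <= 0) by nra. nra. }
  split; apply Rmult_le_compat_l; lra.
Qed.

Definition Pos (r s a b : R) : Prop :=
  0 < a + b /\ 0 < r - 1 - a - b /\ 0 < b /\ 0 < a /\ 0 < r*s - r - s - s*b /\ 0 < 1 - (s-1)*a - b.

Lemma phi_diff r s a0 b0 a b :
  1 < s -> Pos r s a0 b0 -> Pos r s a b ->
  ln (r-1) + ln (a0+b0) = ln (r-1-a0-b0) ->
  ln (1-(s-1)*a0-b0) = ln a0 ->
  ln (r*s-r-s-s*b0) + ln a0 = 2 * ln b0 ->
  phi r s a b - phi r s a0 b0 =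
    E (a0+b0) (a+b) + E (r-1-a0-b0) (r-1-a-b) - E a0 a - 2/(s-1) * E b0 b
    - 1/(s*(s-1)) * E (r*s-r-s-s*b0) (r*s-r-s-s*b) - 1/(s-1) * E (1-(s-1)*a0-b0) (1-(s-1)*a-b).
Proof.
  intros Hs P0 P H1 H2 H3.
  unfold Pos in *.
  unfold phi, g.
  repeat match goal with |- context [Rlt_dec ?x ?y] => destruct (Rlt_dec x y); [|exfalso; lra] end.
  unfold E.
  rewrite <- H1, H2.
  replace (ln (r*s-r-s-s*b0)) with (2 * ln b0 - ln a0) by lra.
  field. lra.
Qed.

Lemma Pos_loc_a r s a b : Pos r s a b -> locally a (fun y => Pos r s y b).
Proof.
  intros (H1&H2&H3&H4&H5&H6).
  pose proof (loc_lin a 1 b ltac:(lra)) as L1.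
  pose proof (loc_lin a (-1) (r-1-b) ltac:(lra)) as L2.
  pose proof (loc_lin a 1 0 ltac:(lra)) as L4.
  pose proof (loc_lin a (-(s-1)) (1-b) ltac:(lra)) as L6.
  generalize (filter_and _ _ L1 (filter_and _ _ L2 (filter_and _ _ L4 L6))).
  apply filter_imp. intros y (K1&K2&K4&K6). unfold Pos. repeat split; lra.
Qed.

Lemma Pos_loc_b r s a b : Pos r s a b -> locally b (fun y => Pos r s a y).
Proof.
  intros (H1&H2&H3&H4&H5&H6).
  pose proof (loc_lin b 1 a ltac:(lra)) as L1.
  pose proof (loc_lin b (-1) (r-1-a) ltac:(lra)) as L2.
  pose proof (loc_lin b 1 0 ltac:(lra)) as L3.
  pose proof (loc_lin b (-s) (r*s-r-s) ltac:(lra)) as L5.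
  pose proof (loc_lin b (-1) (1-(s-1)*a) ltac:(lra)) as L6.
  generalize (filter_and _ _ L1 (filter_and _ _ L2 (filter_and _ _ L3 (filter_and _ _ L5 L6)))).
  apply filter_imp. intros y (K1&K2&K3&K5&K6). unfold Pos. repeat split; lra.
Qed.

Definition phiL (r s a b : R) : R :=
  (a + b) * ln (r - 1) + (a + b) * ln (a + b) + (r - 1 - a - b) * ln (r - 1 - a - b)
  - (2 / (s - 1)) * (b * ln b) - a * ln a
  - (1 / (s * (s - 1))) * ((r * s - r - s - s * b) * ln (r * s - r - s - s * b))
  - (1 / (s - 1)) * ((1 - (s - 1) * a - b) * ln (1 - (s - 1) * a - b)).

Lemma phi_phiL r s a b : Pos r s a b -> phi r s a b = phiL r s a b.
Proof.
  intros (H1&H2&H3&H4&H5&H6). unfold phi, phiL, g.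
  repeat match goal with |- context [Rlt_dec ?x ?y] => destruct (Rlt_dec x y); [|exfalso; lra] end.
  reflexivity.
Qed.

Definition da r s a b :=
  ln (r-1) + ln (a+b) - ln (r-1-a-b) - ln a + ln (1-(s-1)*a-b).
Definition db r s a b :=
  ln (r-1) + ln (a+b) - ln (r-1-a-b) - 2/(s-1) * (ln b + 1)
  + 1/(s-1) * (ln (r*s-r-s-s*b) + 1) + 1/(s-1) * (ln (1-(s-1)*a-b) + 1).

Lemma Dphi_a r s a b : 1 < s -> 1 < r -> Pos r s a b -> Derive (fun y => phi r s y b) a = da r s a b.
Proof.
  intros Hs Hr P.
  rewrite (Derive_ext_loc _ (fun y => phiL r s y b)).
  2:{ apply (filter_imp (fun y => Pos r s y b)). intros; apply phi_phiL; auto. apply Pos_loc_a; auto. }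
  apply is_derive_unique. destruct P as (H1&H2&H3&H4&H5&H6). unfold phiL, da.
  auto_derive.
  - repeat split; lra.
  - replace (r - 1 + - a + - b) with (r-1-a-b) by ring. replace (1 + - ((s - 1) * a) + - b) with (1-(s-1)*a-b) by ring. field. lra.
Qed.

Lemma Dphi_b r s a b : 1 < s -> 1 < r -> Pos r s a b -> Derive (fun y => phi r s a y) b = db r s a b.
Proof.
  intros Hs Hr P.
  rewrite (Derive_ext_loc _ (fun y => phiL r s a y)).
  2:{ apply (filter_imp (fun y => Pos r s a y)). intros; apply phi_phiL; auto. apply Pos_loc_b; auto. }
  apply is_derive_unique. destruct P as (H1&H2&H3&H4&H5&H6). unfold phiL, db.
  auto_derive.
  - repeat split; lra.
  - replace (r - 1 - a + - b) with (r-1-a-b) by ring. replace (r * s - r - s + - (s * b)) with (r*s-r-s-s*b) by ring. replace (1 - (s - 1) * a + - b) with (1-(s-1)*a-b) by ring. field. lra.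
Qed.

Definition Hs0 r a b := 1/(a+b) + 1/(r-1-a-b).
Definition daa r s a b := Hs0 r a b - 1/a - (s-1)/(1-(s-1)*a-b).
Definition dab r s a b := Hs0 r a b - 1/(1-(s-1)*a-b).
Definition dbb r s a b := Hs0 r a b - 2/((s-1)*b) - s/((s-1)*(r*s-r-s-s*b)) - 1/((s-1)*(1-(s-1)*a-b)).

Lemma D_aa r s a b : 1 < s -> 1 < r -> Pos r s a b -> d_aa (phi r s) a b = daa r s a b.
Proof.
  intros Hs Hr P. unfold d_aa.
  rewrite (Derive_ext_loc _ (fun y => da r s y b)).
  2:{ apply (filter_imp (fun y => Pos r s y b)). intros; apply Dphi_a; auto. apply Pos_loc_a; auto. }
  apply is_derive_unique. destruct P as (H1&H2&H3&H4&H5&H6). unfold da, daa, Hs0.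
  auto_derive.
  - repeat split; lra.
  - field. repeat split; lra.
Qed.

Lemma D_ab r s a b : 1 < s -> 1 < r -> Pos r s a b -> d_ab (phi r s) a b = dab r s a b.
Proof.
  intros Hs Hr P. unfold d_ab.
  rewrite (Derive_ext_loc _ (fun y => da r s a y)).
  2:{ apply (filter_imp (fun y => Pos r s a y)). intros; apply Dphi_a; auto. apply Pos_loc_b; auto. }
  apply is_derive_unique. destruct P as (H1&H2&H3&H4&H5&H6). unfold da, dab, Hs0.
  auto_derive.
  - repeat split; lra.
  - field. repeat split; lra.
Qed.

Lemma D_ba r s a b : 1 < s -> 1 < r -> Pos r s a b -> d_ba (phi r s) a b = dab r s a b.
Proof.
  intros Hs Hr P. unfold d_ba.
  rewrite (Derive_ext_loc _ (fun y => db r s y b)).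
  2:{ apply (filter_imp (fun y => Pos r s y b)). intros; apply Dphi_b; auto. apply Pos_loc_a; auto. }
  apply is_derive_unique. destruct P as (H1&H2&H3&H4&H5&H6). unfold db, dab, Hs0.
  auto_derive.
  - repeat split; lra.
  - field. repeat split; lra.
Qed.

Lemma D_bb r s a b : 1 < s -> 1 < r -> Pos r s a b -> d_bb (phi r s) a b = dbb r s a b.
Proof.
  intros Hs Hr P. unfold d_bb.
  rewrite (Derive_ext_loc _ (fun y => db r s a y)).
  2:{ apply (filter_imp (fun y => Pos r s a y)). intros; apply Dphi_b; auto. apply Pos_loc_b; auto. }
  apply is_derive_unique. destruct P as (H1&H2&H3&H4&H5&H6). unfold db, dbb, Hs0.
  auto_derive.
  - repeat split; lra.
  - field. repeat split; lra.
Qed.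

Definition Nq r s a0 b0 u v :=
  u^2/a0 + 2/(s-1)*(v^2/b0) + 1/(s*(s-1))*((s*v)^2/(r*s-r-s-s*b0))
  + 1/(s-1)*(((s-1)*u+v)^2/(1-(s-1)*a0-b0)).

Lemma scale_le (c x y : R) : 0 <= c -> x <= y -> c * x <= c * y.
Proof. intros; apply Rmult_le_compat_l; auto. Qed.

Lemma local_core r s a0 b0 M d a b :
  1 < s -> Pos r s a0 b0 ->
  ln (r-1) + ln (a0+b0) = ln (r-1-a0-b0) ->
  ln (1-(s-1)*a0-b0) = ln a0 ->
  ln (r*s-r-s-s*b0) + ln a0 = 2 * ln b0 ->
  0 <= d < 1 -> Hs0 r a0 b0 * (2+d) <= M * (2-d) ->
  (forall u v, M * (u+v)^2 <= Nq r s a0 b0 u v) ->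
  Rabs ((a+b) - (a0+b0)) <= d * (a0+b0) ->
  Rabs ((r-1-a-b) - (r-1-a0-b0)) <= d * (r-1-a0-b0) ->
  Rabs (a - a0) <= d * a0 ->
  Rabs (b - b0) <= d * b0 ->
  Rabs ((r*s-r-s-s*b) - (r*s-r-s-s*b0)) <= d * (r*s-r-s-s*b0) ->
  Rabs ((1-(s-1)*a-b) - (1-(s-1)*a0-b0)) <= d * (1-(s-1)*a0-b0) ->
  phi r s a b <= phi r s a0 b0.
Proof.
  intros Hs P0 L1 L2 L3 Hd HM HN B1 B2 B3 B4 B5 B6.
  assert (P : Pos r s a b).
  { destruct P0 as (H1&H2&H3&H4&H5&H6).
    apply Rabs_le_between in B1, B2, B3, B4, B5, B6.
    assert (0 < (1-d)*(a0+b0)) by (apply Rmult_lt_0_compat; lra).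
    assert (0 < (1-d)*(r-1-a0-b0)) by (apply Rmult_lt_0_compat; lra).
    assert (0 < (1-d)*a0) by (apply Rmult_lt_0_compat; lra).
    assert (0 < (1-d)*b0) by (apply Rmult_lt_0_compat; lra).
    assert (0 < (1-d)*(r*s-r-s-s*b0)) by (apply Rmult_lt_0_compat; lra).
    assert (0 < (1-d)*(1-(s-1)*a0-b0)) by (apply Rmult_lt_0_compat; lra).
    unfold Pos; repeat split; lra. }
  pose proof P0 as (H1&H2&H3&H4&H5&H6).
  assert (phi r s a b - phi r s a0 b0 <= 0); [|lra].
  rewrite (phi_diff r s a0 b0 a b Hs P0 P L1 L2 L3).
  destruct (Ebound _ _ _ H1 Hd B1) as [_ E1].
  destruct (Ebound _ _ _ H2 Hd B2) as [_ E2].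
  destruct (Ebound _ _ _ H4 Hd B3) as [E3 _].
  destruct (Ebound _ _ _ H3 Hd B4) as [E4 _].
  destruct (Ebound _ _ _ H5 Hd B5) as [E5 _].
  destruct (Ebound _ _ _ H6 Hd B6) as [E6 _].
  set (u := a - a0) in *. set (v := b - b0) in *.
  assert (Hs1 : 0 <= 2/(s-1)) by (apply Rlt_le, Rdiv_lt_0_compat; lra).
  assert (Hs2 : 0 <= 1/(s*(s-1))) by (apply Rlt_le, Rdiv_lt_0_compat; nra).
  assert (Hs3 : 0 <= 1/(s-1)) by (apply Rlt_le, Rdiv_lt_0_compat; lra).
  apply (scale_le _ _ _ Hs1) in E4.
  apply (scale_le _ _ _ Hs2) in E5.
  apply (scale_le _ _ _ Hs3) in E6.
  set (EA := E (a0+b0) (a+b)) in *.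
  set (EB := E (r-1-a0-b0) (r-1-a-b)) in *.
  set (Ea := E a0 a) in *. set (Eb := E b0 b) in *.
  set (EC := E (r*s-r-s-s*b0) (r*s-r-s-s*b)) in *.
  set (ED := E (1-(s-1)*a0-b0) (1-(s-1)*a-b)) in *.
  assert (Up : EA + EB <= Hs0 r a0 b0 * (u+v)^2 / (2-d)).
  { replace (Hs0 r a0 b0 * (u+v)^2 / (2-d)) with
      ((a + b - (a0 + b0)) ^ 2 / ((2 - d) * (a0 + b0)) +
       (r - 1 - a - b - (r - 1 - a0 - b0)) ^ 2 / ((2 - d) * (r - 1 - a0 - b0))).
    lra. unfold Hs0, u, v. field. lra. }
  assert (Lo : Nq r s a0 b0 u v / (2+d) <= Ea + 2/(s-1)*Eb + 1/(s*(s-1))*EC + 1/(s-1)*ED).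
  { replace (Nq r s a0 b0 u v / (2+d)) with
      (u ^ 2 / ((2 + d) * a0) +
       2 / (s - 1) * (v ^ 2 / ((2 + d) * b0)) +
       1 / (s * (s - 1)) * ((r * s - r - s - s * b - (r * s - r - s - s * b0)) ^ 2 /
                       ((2 + d) * (r * s - r - s - s * b0))) +
       1 / (s - 1) * ((1 - (s - 1) * a - b - (1 - (s - 1) * a0 - b0)) ^ 2 /
                  ((2 + d) * (1 - (s - 1) * a0 - b0)))).
    lra. unfold Nq, u, v. field. repeat split; lra. }
  assert (Key : Hs0 r a0 b0 * (u+v)^2 / (2-d) <= Nq r s a0 b0 u v / (2+d)).
  { pose proof (HN u v) as HNu.
    pose proof (pow2_ge_0 (u+v)) as Hx.
    apply Rle_trans with (M * (u+v)^2 / (2+d)).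
    - unfold Rdiv. apply Rmult_le_reg_r with ((2-d)*(2+d)). nra.
      replace (Hs0 r a0 b0 * (u + v) ^ 2 * / (2 - d) * ((2 - d) * (2 + d)))
        with ((Hs0 r a0 b0 * (2+d)) * (u+v)^2) by (field; lra).
      replace (M * (u + v) ^ 2 * / (2 + d) * ((2 - d) * (2 + d)))
        with ((M * (2-d)) * (u+v)^2) by (field; lra).
      apply Rmult_le_compat_r; auto.
    - unfold Rdiv. apply Rmult_le_compat_r; auto. left; apply Rinv_0_lt_compat; lra. }
  lra.
Qed.

Definition Fpoly (r s : R) : R :=
  (r-1)^2*(s-1)*(r*(s-1)-1) - 1 - (s-2)*(r*s-r-s)^2.

Section Pt.
Variables r s : R.
Hypothesis Hr : 2 <= r.
Hypothesis Hs : 2 <= s.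
Hypothesis Hm : 0 < r*s - r - s.
Hypothesis HF : 0 < Fpoly r s.
Let a0 := 1 / (r * (s - 1)).
Let b0 := (r * s - r - s) / (r * (s - 1)).
Let m := r*s-r-s.
Let p := r*(s-1)*s.
Let t := r*(s-1).
Let w := r*(1+2/m+s/m^2).

Lemma Nq_eq u v : Nq r s a0 b0 u v = p*u^2 + 2*t*u*v + w*v^2.
Proof. unfold Nq, a0, b0, p, t, w, m. field. repeat split; nra. Qed.

Lemma hs0_eq : Hs0 r a0 b0 = r/(r-1) + r/(r-1)^2.
Proof. unfold Hs0, a0, b0. field. repeat split; nra. Qed.

Lemma Mgap : (p*w - t^2) - Hs0 r a0 b0 * (p+w-2*t) = (s-1)*Fpoly r s*r^3/(m^2*(r-1)^2).
Proof. rewrite hs0_eq. unfold Fpoly, p, w, t, m. field. repeat split; nra. Qed.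

Let M := (p*w - t^2)/(p+w-2*t).

Lemma den_pos : 0 < p + w - 2*t.
Proof.
  assert (0 < w).
  { unfold w. apply Rmult_lt_0_compat. lra.
    assert (0 < 2/m) by (apply Rdiv_lt_0_compat; unfold m; lra).
    assert (0 < s/m^2) by (apply Rdiv_lt_0_compat; [lra| apply pow_lt; unfold m; lra]).
    lra. }
  assert (p - 2*t = r*(s-1)*(s-2)) by (unfold p, t; ring).
  assert (0 <= r*(s-1)*(s-2)) by (apply Rmult_le_pos; [apply Rmult_le_pos|]; lra).
  lra.
Qed.

Lemma gap_pos : 0 < (p*w - t^2) - Hs0 r a0 b0 * (p+w-2*t).
Proof.
  rewrite Mgap. apply Rdiv_lt_0_compat.
  - apply Rmult_lt_0_compat; [apply Rmult_lt_0_compat; [lra|auto]|]. apply pow_lt; lra.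
  - apply Rmult_lt_0_compat; apply pow_lt; unfold m; lra.
Qed.

Lemma h_pos : 0 < Hs0 r a0 b0.
Proof.
  rewrite hs0_eq. assert (0 < r/(r-1)) by (apply Rdiv_lt_0_compat; lra).
  assert (0 < r/(r-1)^2) by (apply Rdiv_lt_0_compat; [lra| apply pow_lt; lra]). lra.
Qed.

Lemma M_gt : Hs0 r a0 b0 < M.
Proof.
  pose proof den_pos. pose proof gap_pos. unfold M.
  apply Rmult_lt_reg_r with (p+w-2*t); auto.
  unfold Rdiv. rewrite Rmult_assoc, Rinv_l by lra. lra.
Qed.

Lemma N_ge u v : M * (u+v)^2 <= Nq r s a0 b0 u v.
Proof.
  rewrite Nq_eq. pose proof den_pos.
  assert (Id : (p*u^2 + 2*t*u*v + w*v^2)*(p+w-2*t) - (p*w-t^2)*(u+v)^2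
               = ((p-t)*u - (w-t)*v)^2) by ring.
  pose proof (pow2_ge_0 ((p-t)*u - (w-t)*v)).
  apply Rmult_le_reg_r with (p+w-2*t); auto.
  unfold M. replace ((p * w - t ^ 2) / (p + w - 2 * t) * (u + v) ^ 2 * (p + w - 2 * t))
    with ((p*w-t^2)*(u+v)^2) by (field; lra). lra.
Qed.

Lemma N_pos u v : (u, v) <> (0, 0) -> 0 < Nq r s a0 b0 u v.
Proof.
  intros Huv. rewrite Nq_eq.
  assert (Hp : 0 < p) by (unfold p; apply Rmult_lt_0_compat; [apply Rmult_lt_0_compat|]; lra).
  assert (Hd : 0 < p*w - t^2) by (pose proof gap_pos; pose proof h_pos; pose proof den_pos;
     assert (0 < Hs0 r a0 b0 * (p+w-2*t)) by (apply Rmult_lt_0_compat; auto); lra).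
  assert (Id : p*(p*u^2 + 2*t*u*v + w*v^2) = (p*u+t*v)^2 + (p*w-t^2)*v^2) by ring.
  apply Rmult_lt_reg_l with p; auto. rewrite Rmult_0_r, Id.
  destruct (Req_dec v 0) as [->|Hv].
  - assert (u <> 0) by (intros ->; apply Huv; reflexivity).
    replace ((p*u+t*0)^2 + (p*w-t^2)*0^2) with ((p*u)^2) by ring.
    apply pow2_gt_0. intro H0. apply Rmult_integral in H0 as [H0|H0]; lra.
  - pose proof (pow2_ge_0 (p*u+t*v)).
    assert (0 < v^2) by (apply pow2_gt_0; auto).
    assert (0 < (p*w-t^2)*v^2) by (apply Rmult_lt_0_compat; auto). lra.
Qed.

Lemma rs_pos : 0 < r*(s-1).
Proof. apply Rmult_lt_0_compat; lra. Qed.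

Lemma A0_eq : a0 + b0 = (r-1)/r.
Proof. unfold a0, b0. field. lra. Qed.
Lemma B0_eq : r - 1 - a0 - b0 = (r-1)^2/r.
Proof. unfold a0, b0. field. lra. Qed.
Lemma C0_eq : r*s-r-s-s*b0 = m^2/(r*(s-1)).
Proof. unfold a0, b0, m. field. lra. Qed.
Lemma D0_eq : 1-(s-1)*a0-b0 = a0.
Proof. unfold a0, b0. field. lra. Qed.

Lemma a0_pos : 0 < a0.
Proof. unfold a0. apply Rdiv_lt_0_compat. lra. apply rs_pos. Qed.
Lemma b0_pos : 0 < b0.
Proof. unfold b0. apply Rdiv_lt_0_compat. lra. apply rs_pos. Qed.

Lemma Pos0 : Pos r s a0 b0.
Proof.
  pose proof a0_pos; pose proof b0_pos; pose proof rs_pos.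
  unfold Pos. rewrite A0_eq, B0_eq, C0_eq, D0_eq.
  repeat split; auto; apply Rdiv_lt_0_compat; try apply pow_lt; unfold m; lra.
Qed.

Lemma L1 : ln (r-1) + ln (a0+b0) = ln (r-1-a0-b0).
Proof.
  rewrite <- ln_mult. f_equal. rewrite A0_eq, B0_eq. field. lra. lra.
  rewrite A0_eq. apply Rdiv_lt_0_compat; lra.
Qed.
Lemma L2 : ln (1-(s-1)*a0-b0) = ln a0.
Proof. rewrite D0_eq. reflexivity. Qed.
Lemma L3 : ln (r*s-r-s-s*b0) + ln a0 = 2 * ln b0.
Proof.
  pose proof a0_pos; pose proof b0_pos; pose proof rs_pos.
  assert (0 < r*s-r-s-s*b0) by (rewrite C0_eq; apply Rdiv_lt_0_compat; [apply pow_lt; unfold m; lra|auto]).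
  rewrite <- ln_mult by auto. replace (2 * ln b0) with (ln b0 + ln b0) by ring.
  rewrite <- ln_mult by auto. f_equal. rewrite C0_eq. unfold a0, b0, m. field. lra.
Qed.

Lemma hess_form u v :
  u * u * daa r s a0 b0 + u * v * dab r s a0 b0 + v * u * dab r s a0 b0 + v * v * dbb r s a0 b0
  = Hs0 r a0 b0 * (u+v)^2 - Nq r s a0 b0 u v.
Proof.
  pose proof Pos0 as (H1&H2&H3&H4&H5&H6).
  unfold daa, dab, dbb, Nq. field. repeat split; lra.
Qed.

Lemma hess_neg u v : (u, v) <> (0, 0) ->
  u * u * daa r s a0 b0 + u * v * dab r s a0 b0 + v * u * dab r s a0 b0 + v * v * dbb r s a0 b0 < 0.
Proof.
  intros Huv. rewrite hess_form.
  pose proof (N_ge u v). pose proof (N_pos u v Huv). pose proof M_gt.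
  pose proof (pow2_ge_0 (u+v)).
  assert (Hs0 r a0 b0 * (u+v)^2 <= M * (u+v)^2) by (apply Rmult_le_compat_r; lra).
  destruct H2 as [H2|H2]. assert (Hs0 r a0 b0 * (u+v)^2 < M * (u+v)^2) by (apply Rmult_lt_compat_r; lra). lra. rewrite <- H2. lra.
Qed.

Lemma inK0 : inK s a0 b0.
Proof.
  pose proof a0_pos; pose proof b0_pos. unfold inK.
  assert ((s-1)*a0 + b0 = 1 - a0) by (pose proof D0_eq; lra). lra.
Qed.

Lemma locmax : exists eps : R, 0 < eps /\ forall a b : R, Rabs (a - a0) < eps -> Rabs (b - b0) < eps -> phi r s a b <= phi r s a0 b0.
Proof.
  pose proof Pos0 as P0. pose proof P0 as (H1&H2&H3&H4&H5&H6).
  pose proof M_gt as HMg. pose proof h_pos as Hh.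
  set (h := Hs0 r a0 b0) in *.
  set (d := (M - h)/(M + h)).
  assert (Hd : 0 <= d < 1).
  { unfold d. split. apply Rlt_le, Rdiv_lt_0_compat; lra.
    apply Rmult_lt_reg_r with (M+h). lra. unfold Rdiv. rewrite Rmult_assoc, Rinv_l by lra. lra. }
  assert (HM : h * (2+d) <= M * (2-d)).
  { unfold d. apply Rmult_le_reg_r with (M+h). lra.
    replace (h * (2 + (M - h) / (M + h)) * (M + h)) with (h*(3*M+h)) by (field; lra).
    replace (M * (2 - (M - h) / (M + h)) * (M + h)) with (M*(M+3*h)) by (field; lra).
    nra. }
  set (mn := Rmin (Rmin a0 b0) (Rmin (Rmin (a0+b0) (r-1-a0-b0)) (r*s-r-s-s*b0))).
  assert (Hmn : 0 < mn) by (unfold mn; repeat apply Rmin_glb_lt; lra).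
  assert (Hmn1 : mn <= a0) by (unfold mn; eapply Rle_trans; [apply Rmin_l|apply Rmin_l]).
  assert (Hmn2 : mn <= b0) by (unfold mn; eapply Rle_trans; [apply Rmin_l|apply Rmin_r]).
  assert (Hmn3 : mn <= a0+b0) by (unfold mn; eapply Rle_trans; [apply Rmin_r|];
     eapply Rle_trans; [apply Rmin_l|apply Rmin_l]).
  assert (Hmn4 : mn <= r-1-a0-b0) by (unfold mn; eapply Rle_trans; [apply Rmin_r|];
     eapply Rle_trans; [apply Rmin_l|apply Rmin_r]).
  assert (Hmn5 : mn <= r*s-r-s-s*b0) by (unfold mn; eapply Rle_trans; [apply Rmin_r|apply Rmin_r]).
  destruct (Req_dec d 0) as [Hd0|Hd0].
  { exfalso. unfold d in Hd0. assert (0 < (M-h)/(M+h)) by (apply Rdiv_lt_0_compat; lra). lra. }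
  assert (Hdp : 0 < d) by lra.
  set (eps := d * mn / (2*s)).
  assert (Heps : 0 < eps) by (unfold eps; apply Rdiv_lt_0_compat; [apply Rmult_lt_0_compat|]; lra).
  assert (Hse : s * eps = d * mn / 2) by (unfold eps; field; lra).
  assert (Hdmn : forall x, mn <= x -> d * mn <= d * x) by (intros; apply Rmult_le_compat_l; lra).
  exists eps. split; auto.
  intros a b Ha Hb.
  apply Rabs_lt_between in Ha, Hb.
  assert (e2 : 2 * eps <= s * eps) by (apply Rmult_le_compat_r; lra).
  assert (Hdmn0 : 0 < d * mn) by (apply Rmult_lt_0_compat; lra).
  apply (local_core r s a0 b0 M d a b); auto; try lra; try apply L1; try apply L2; try apply L3.
  - apply N_ge.
  - apply Rabs_le_between. pose proof (Hdmn _ Hmn3). split; lra.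
  - apply Rabs_le_between. pose proof (Hdmn _ Hmn4). split; lra.
  - apply Rabs_le_between. pose proof (Hdmn _ Hmn1).
    assert (eps <= s*eps) by (pose proof (Rmult_le_compat_r eps 1 s ltac:(lra) ltac:(lra)); lra). split; lra.
  - apply Rabs_le_between. pose proof (Hdmn _ Hmn2).
    assert (eps <= s*eps) by (pose proof (Rmult_le_compat_r eps 1 s ltac:(lra) ltac:(lra)); lra). split; lra.
  - replace ((r*s-r-s-s*b) - (r*s-r-s-s*b0)) with (-(s*(b-b0))) by ring.
    apply Rabs_le_between. pose proof (Hdmn _ Hmn5).
    assert (s*(b-b0) <= s*eps) by (apply Rmult_le_compat_l; lra).
    assert (s*(-eps) <= s*(b-b0)) by (apply Rmult_le_compat_l; lra). split; lra.
  - replace ((1-(s-1)*a-b) - (1-(s-1)*a0-b0)) with (-((s-1)*(a-a0)) - (b-b0)) by ring.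
    rewrite D0_eq. apply Rabs_le_between. pose proof (Hdmn _ Hmn1).
    assert ((s-1)*(a-a0) <= (s-1)*eps) by (apply Rmult_le_compat_l; lra).
    assert ((s-1)*(-eps) <= (s-1)*(a-a0)) by (apply Rmult_le_compat_l; lra). split; lra.
Qed.
End Pt.

Lemma Fpos_big (r s : R) : 5 <= s -> s - 1 <= r -> 0 < Fpoly r s.
Proof.
  intros Hs Hr.
  set (j := s - 5). set (k := r - s + 1).
  assert (Hj : 0 <= j) by (unfold j; lra).
  assert (Hk : 0 <= k) by (unfold k; lra).
  replace (Fpoly r s) with
    (176 + 240*k + 108*k^2 + 16*k^3 + 200*j + 248*j*k + 87*j*k^2 + 8*j*k^3
     + 83*j^2 + 95*j^2*k + 23*j^2*k^2 + j^2*k^3 + 15*j^3 + 16*j^3*k + 2*j^3*k^2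
     + j^4 + j^4*k)
    by (unfold Fpoly, j, k; ring).
  assert (0 <= j*k) by nra. assert (0 <= j^2) by nra. assert (0<= k^2) by nra.
  assert (0 <= j^2*k) by nra. assert (0 <= j*k^2) by nra.
  assert (0 <= k^3) by nra. assert (0 <= j^3) by nra.
  assert (0 <= j*k^3) by nra. assert (0 <= j^2*k^2) by nra.
  assert (0 <= j^2*k^3) by nra. assert (0 <= j^3*k) by nra.
  assert (0 <= j^3*k^2) by nra. assert (0 <= j^4) by nra. assert (0 <= j^4*k) by nra.
  lra.
Qed.

Lemma Fpos_small (r s : R) : (s = 2 /\ 3 <= r) \/ (s = 3 /\ 2 <= r) \/ (s = 4 /\ 2 <= r) -> 0 < Fpoly r s.
Proof.
  intros [[-> H]|[[-> H]|[-> H]]]; set (k := r - 2) in *.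
  - replace (Fpoly r 2) with (7 + 12*(k-1) + 6*(k-1)^2 + (k-1)^3) by (unfold Fpoly, k; ring).
    assert (0 <= k - 1) by (unfold k; lra). nra.
  - replace (Fpoly r 3) with (4 + 12*k + 10*k^2 + 4*k^3) by (unfold Fpoly, k; ring).
    assert (0 <= k) by (unfold k; lra). nra.
  - replace (Fpoly r 4) with (6 + 15*k + 15*k^2 + 9*k^3) by (unfold Fpoly, k; ring).
    assert (0 <= k) by (unfold k; lra). nra.
Qed.

Lemma nat_facts (r s : nat)
  (hs : (2 <= s)%nat) (hr : (2 <= r)%nat)
  (hs2 : s = 2%nat -> (3 <= r)%nat)
  (hs5 : (5 <= s)%nat -> (s - 1 <= r)%nat) :
  2 <= INR r /\ 2 <= INR s /\ 0 < INR r * INR s - INR r - INR s /\ 0 < Fpoly (INR r) (INR s).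
Proof.
  assert (Hr : 2 <= INR r) by (apply le_INR in hr; simpl in hr; lra).
  assert (Hs : 2 <= INR s) by (apply le_INR in hs; simpl in hs; lra).
  assert (C : (s = 2 \/ s = 3 \/ s = 4 \/ 5 <= s)%nat) by lia.
  destruct C as [->|[->|[->|C]]].
  - specialize (hs2 eq_refl). apply le_INR in hs2. simpl in hs2 |- *.
    repeat split; try lra. apply Fpos_small. left. split; [ring|lra].
  - simpl. repeat split; try lra. apply Fpos_small. right; left. split; [ring|lra].
  - simpl. repeat split; try lra. apply Fpos_small. right; right. split; [ring|lra].
  - specialize (hs5 C). apply le_INR in hs5. rewrite minus_INR in hs5 by lia.
    apply le_INR in C. simpl in C, hs5.
    repeat split; try lra. nra. apply Fpos_big; lra.
Qed.

Theorem lemmaA3 (r s : nat)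
  (hs : (2 <= s)%nat) (hr : (2 <= r)%nat)
  (hs2 : s = 2%nat -> (3 <= r)%nat)
  (hs5 : (5 <= s)%nat -> (s - 1 <= r)%nat) :
  let rR := INR r in
  let sR := INR s in
  let a0 := 1 / (rR * (sR - 1)) in
  let b0 := (rR * sR - rR - sR) / (rR * (sR - 1)) in
  inK sR a0 b0 /\
  (exists eps : R, 0 < eps /\
     forall a b : R, inK sR a b ->
       Rabs (a - a0) < eps -> Rabs (b - b0) < eps ->
       phi rR sR a b <= phi rR sR a0 b0) /\
  hessian_neg_def (phi rR sR) a0 b0.
Proof.
  destruct (nat_facts r s hs hr hs2 hs5) as (Hr & Hs & Hm & HF).
  intros rR sR a0 b0.
  split; [|split].
  - apply inK0; auto.
  - destruct (locmax rR sR Hr Hs Hm HF) as [eps [He Hl]].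
    exists eps. split; auto.
  - unfold hessian_neg_def. intros u v Huv.
    pose proof (Pos0 rR sR Hr Hs Hm) as P.
    rewrite (D_aa rR sR a0 b0), (D_ab rR sR a0 b0), (D_ba rR sR a0 b0), (D_bb rR sR a0 b0); try (unfold rR, sR; lra); auto.
    apply hess_neg; auto.
Qed.
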